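(* Let $V>0$, $C_0>0$, $A>0$, $0<\delta<1$ with $\delta\neq\frac14$, and $\epsilon$ with $\frac{4\delta}{3\delta+1}\le\epsilon<1$. Let $R\ge2$, and let $E,y:[R,\infty)\to\mathbb R$ be functions with the following properties: 1. $E-y$ is continuous and piecewise differentiable, with $\frac{d(E-y)}{dr}=\frac{y}{r}$ wherever it is differentiable; 2. $|y(r)|\le C_0r^{-1/3}|E(r)|^{4/3}$ for all $r\ge R$; 3. $|E(r)-RV|\le A(r^\delta+R^\epsilon)$ for all $r\ge R$. Then there is a constant $A'$ depending only on $V,C_0,A,\delta,\epsilon$ (not on $R$, $E$, $y$) such that $$|E(r)-RV|\le A'\left(r^{\frac43\delta-\frac13}+R^\epsilon\right)\qquad\text{for all } r\ge R.$$
   Context: In the paper this is applied with $R=r_k$, $V=\mathrm{Vol}(Y)$, $E=\hat E$ the energy of the min-max generator, and $y=y_2=(\hat{cs}+2\hat e_\mu)/r$. *)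

(* Defs.v *)
From Stdlib Require Import Reals List.
Open Scope R_scope.

Definition continuous_on_halfline (F : R -> R) (R0 : R) : Prop :=
  forall x, R0 <= x ->
    forall eps, 0 < eps -> exists d, 0 < d /\
      forall z, R0 <= z -> Rabs (z - x) < d -> Rabs (F z - F x) < eps.

Definition piecewise_differentiable_on_halfline (F : R -> R) (R0 : R) : Prop :=
  forall b, exists L : list R,
    forall x, R0 < x < b -> ~ In x L -> exists l, derivable_pt_lim F x l.

Definition hyp_ode (E y : R -> R) (R0 : R) : Prop :=
  let F := fun r => E r - y r in
  continuous_on_halfline F R0 /\
  piecewise_differentiable_on_halfline F R0 /\
  (forall x l, R0 < x -> derivable_pt_lim F x l -> l = y x / x).

(* Real power x^a for x >= 0, with the convention 0^a = 0 (a > 0).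
   Stdlib's Rpower 0 a = exp (a * ln 0) = 1, which is wrong at 0. *)
Definition rpow (x a : R) : R := if Rle_dec x 0 then 0 else Rpower x a.

(* Main.v *)
Require Import Defs.
From Stdlib Require Import Reals Lra List.
From Coquelicot Require Import Coquelicot.
Open Scope R_scope.

Lemma mono_base (H : R -> R) a b : a <= b ->
  (forall x, a <= x <= b -> continuity_pt H x) ->
  (forall x, a < x < b -> exists l, derivable_pt_lim H x l /\ 0 <= l) ->
  H a <= H b.
Proof.
intros hab hc hd.
pose (df := fun x => if Rlt_dec a x then if Rlt_dec x b then Derive H x else 0 else 0).
destruct (MVT_gen H a b df) as [c [hc1 hc2]].
- rewrite (Rmin_left a b hab), (Rmax_right a b hab). intros x hx.
  destruct (hd x hx) as [l [hl _]]. unfold df.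
  destruct (Rlt_dec a x); [|lra]. destruct (Rlt_dec x b); [|lra].
  apply is_derive_Reals in hl. rewrite (is_derive_unique _ _ _ hl). exact hl.
- rewrite (Rmin_left a b hab), (Rmax_right a b hab). exact hc.
- assert (0 <= df c).
  { unfold df. destruct (Rlt_dec a c); [|lra]. destruct (Rlt_dec c b); [|lra].
    destruct (hd c (conj r r0)) as [l [hl hl0]].
    apply is_derive_Reals in hl. rewrite (is_derive_unique _ _ _ hl). exact hl0. }
  assert (0 <= df c * (b - a)) by (apply Rmult_le_pos; lra). lra.
Qed.

Lemma mono (H : R -> R) L : forall a b, a <= b ->
  (forall x, a <= x <= b -> continuity_pt H x) ->
  (forall x, a < x < b -> ~ In x L -> exists l, derivable_pt_lim H x l /\ 0 <= l) ->
  H a <= H b.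
Proof.
induction L as [|z L IH]; intros a b hab hc hd.
- apply mono_base; [exact hab|exact hc|]. intros x hx; apply hd; auto.
- destruct (Rlt_dec a z) as [h1|h1]; [destruct (Rlt_dec z b) as [h2|h2]|].
  + apply Rle_trans with (H z).
    * apply IH; [lra| intros x hx; apply hc; lra |].
      intros x hx hn. apply hd; [lra|]. intros [e|e]; [lra|auto].
    * apply IH; [lra| intros x hx; apply hc; lra |].
      intros x hx hn. apply hd; [lra|]. intros [e|e]; [lra|auto].
  + apply IH; auto. intros x hx hn. apply hd; auto. intros [e|e]; [lra|auto].
  + apply IH; auto. intros x hx hn. apply hd; auto. intros [e|e]; [lra|auto].
Qed.

Lemma Rpower_pos x y : 0 < Rpower x y.
Proof. unfold Rpower; apply exp_pos. Qed.

Lemma Rpower_ge1 x y : 1 <= x -> 0 <= y -> 1 <= Rpower x y.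
Proof. intros; rewrite <- (Rpower_O x) by lra. apply Rle_Rpower; lra. Qed.

Lemma Rpower_neg_mono s t a : 0 < s <= t -> 0 <= a -> Rpower t (- a) <= Rpower s (- a).
Proof.
intros h ha. rewrite !Rpower_Ropp. apply Rinv_le_contravar. apply Rpower_pos.
apply Rle_Rpower_l; lra.
Qed.

Lemma cont_half (F : R -> R) R0 x : continuous_on_halfline F R0 -> R0 < x -> continuity_pt F x.
Proof.
intros hc hx eps heps. destruct (hc x (Rlt_le _ _ hx) eps heps) as [d [hd hz]].
exists (Rmin d (x - R0)). split. apply Rmin_pos; lra.
intros z [_ hz2]. simpl in *. unfold R_dist in *.
assert (Rabs (z - x) < d) by (eapply Rlt_le_trans; [exact hz2| apply Rmin_l]).
assert (Rabs (z - x) < x - R0) by (eapply Rlt_le_trans; [exact hz2| apply Rmin_r]).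
apply hz; auto. apply Rabs_def2 in H0. lra.
Qed.

Lemma Rabs_inv2 a b : Rabs a <= b -> - b <= a <= b.
Proof. intros h. pose proof (Rle_abs a). pose proof (Rle_abs (-a)). rewrite Rabs_Ropp in H0. lra. Qed.

Lemma ybound (V C0 A delta eps R0 s ys Es : R) :
  0 < V -> 0 < C0 -> 0 < A -> 0 < delta -> eps < 1 -> 2 <= R0 -> R0 <= s ->
  Rabs ys <= C0 * Rpower s (-(1/3)) * rpow (Rabs Es) (4/3) ->
  Rabs (Es - R0 * V) <= A * (Rpower s delta + Rpower R0 eps) ->
  Rabs ys <= C0 * Rpower (2 * (V + A)) (4/3) *
     (Rpower R0 (4/3) * Rpower s (-(1/3)) + Rpower s (4/3*delta - 1/3)).
Proof.
intros hV hC hA hd he hR hs hy hE.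
set (K := V + A).
set (m := Rmax R0 (Rpower s delta)).
assert (hm0 : 0 < m) by (unfold m; eapply Rlt_le_trans; [|apply Rmax_l]; lra).
assert (hRe : Rpower R0 eps <= R0).
{ rewrite <- (Rpower_1 R0) at 2 by lra. apply Rle_Rpower; lra. }
assert (hEs : Rabs Es <= 2 * K * m).
{ apply Rabs_inv2 in hE. assert (R0 <= m) by apply Rmax_l.
  assert (Rpower s delta <= m) by apply Rmax_r.
  assert (0 <= A * (m - R0)) by (apply Rmult_le_pos; lra).
  assert (0 <= A * (m - Rpower s delta)) by (apply Rmult_le_pos; lra).
  assert (0 <= V * (m - R0)) by (apply Rmult_le_pos; lra).
  assert (0 <= A * (R0 - Rpower R0 eps)) by (apply Rmult_le_pos; lra).
  assert (0 < Rpower s delta) by apply Rpower_pos.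
  unfold K. apply Rabs_le. split; nra. }
assert (hr : rpow (Rabs Es) (4/3) <= Rpower (2 * K) (4/3) * Rpower m (4/3)).
{ rewrite Rpower_mult_distr by (unfold K; lra). unfold rpow.
  destruct (Rle_dec (Rabs Es) 0). apply Rlt_le, Rpower_pos.
  apply Rle_Rpower_l; lra. }
assert (hm : Rpower m (4/3) <= Rpower R0 (4/3) + Rpower s (4/3*delta)).
{ assert (0 < Rpower R0 (4/3)) by apply Rpower_pos.
  assert (0 < Rpower s (4/3*delta)) by apply Rpower_pos.
  unfold m, Rmax. destruct (Rle_dec R0 (Rpower s delta)).
  - rewrite Rpower_mult. replace (delta * (4/3)) with (4/3*delta) by ring. lra.
  - lra. }
assert (hs3 : Rpower s (4/3*delta - 1/3) = Rpower s (-(1/3)) * Rpower s (4/3*delta)).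
{ rewrite <- Rpower_plus. f_equal; ring. }
rewrite hs3.
assert (0 < Rpower s (-(1/3))) by apply Rpower_pos.
assert (0 < Rpower (2*K) (4/3)) by apply Rpower_pos.
eapply Rle_trans; [exact hy|].
assert (0 < C0 * Rpower s (-(1/3))) by (apply Rmult_lt_0_compat; lra).
apply Rle_trans with (C0 * Rpower s (-(1/3)) * (Rpower (2 * K) (4/3) * (Rpower R0 (4/3) + Rpower s (4/3*delta)))).
- apply Rmult_le_compat_l; [lra|]. eapply Rle_trans; [exact hr|].
  apply Rmult_le_compat_l; lra.
- right. ring.
Qed.

Lemma Rpower_m1 s a : 0 < s -> Rpower s (a - 1) = Rpower s a / s.
Proof. intros hs. unfold Rminus. rewrite Rpower_plus, Rpower_Ropp, Rpower_1 by lra. reflexivity. Qed.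

Theorem mainTheorem11 (V C0 A delta eps : R)
  (hV : 0 < V) (hC0 : 0 < C0) (hA : 0 < A)
  (hdelta : 0 < delta < 1) (hdelta4 : delta <> 1/4)
  (heps : 4 * delta / (3 * delta + 1) <= eps < 1) :
  exists A' : R,
    forall (R0 : R) (E y : R -> R),
      2 <= R0 ->
      hyp_ode E y R0 ->
      (forall r, R0 <= r ->
         Rabs (y r) <= C0 * Rpower r (-(1/3)) * rpow (Rabs (E r)) (4/3)) ->
      (forall r, R0 <= r ->
         Rabs (E r - R0 * V) <= A * (Rpower r delta + Rpower R0 eps)) ->
      forall r, R0 <= r ->
        Rabs (E r - R0 * V) <=
          A' * (Rpower r (4/3 * delta - 1/3) + Rpower R0 eps).
Proof.
set (p := 4/3 * delta - 1/3).
set (c := C0 * Rpower (2 * (V + A)) (4/3)).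
assert (hc : 0 < c) by (apply Rmult_lt_0_compat; [lra|apply Rpower_pos]).
assert (hp : p <> 0) by (unfold p; intro; apply hdelta4; lra).
assert (hap : 0 < Rabs p) by (apply Rabs_pos_lt; exact hp).
assert (hpd : p <= delta) by (unfold p; lra).
assert (he0 : 0 <= eps).
{ assert (0 <= 4 * delta / (3 * delta + 1)) by (apply Rlt_le, Rdiv_lt_0_compat; lra). lra. }
exists (2 * A + 7 * c + c / Rabs p).
intros R0 E y hR hode hy hE r hr.
assert (hcap : 0 < c / Rabs p) by (apply Rdiv_lt_0_compat; lra).
set (Re := Rpower R0 eps).
assert (hRe1 : 1 <= Re) by (apply Rpower_ge1; lra).
assert (hrp : 0 < Rpower r p) by apply Rpower_pos.
set (q := 4 / (3 * delta + 1)).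
assert (hq1 : 1 < q) by (unfold q; apply (Rmult_lt_reg_r (3*delta+1)); [lra|];
  unfold Rdiv; rewrite Rmult_assoc, Rinv_l; lra).
assert (hqd : q * delta <= eps).
{ replace (q * delta) with (4 * delta / (3 * delta + 1)) by (unfold q; field; lra). lra. }
set (r1 := Rpower R0 q).
assert (hr1 : R0 < r1).
{ unfold r1. rewrite <- (Rpower_1 R0) at 1 by lra. apply Rpower_lt; lra. }
assert (key1 : Rpower r1 delta <= Re).
{ unfold r1, Re. rewrite Rpower_mult. apply Rle_Rpower; lra. }
assert (key2 : Rpower R0 (4/3) * Rpower r1 (-(1/3)) <= Re).
{ unfold r1, Re. rewrite Rpower_mult, <- Rpower_plus. apply Rle_Rpower; [lra|].
  replace (4/3 + q * -(1/3)) with (q * delta) by (unfold q; field; lra). lra. }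
assert (hyb : forall s, R0 <= s -> Rabs (y s) <= c * (Rpower R0 (4/3) * Rpower s (-(1/3)) + Rpower s p)).
{ intros s hs. unfold c, p. eapply ybound; eauto; lra. }
destruct (Rle_dec r r1) as [hle|hgt].
{ assert (Rpower r delta <= Rpower r1 delta) by (apply Rle_Rpower_l; lra).
  eapply Rle_trans; [apply hE; lra|]. 
  assert (0 <= 7 * c * (Rpower r p + Re)) by (apply Rmult_le_pos; lra).
  assert (0 <= c / Rabs p * (Rpower r p + Re)) by (apply Rmult_le_pos; lra).
  assert (0 <= A * Rpower r p) by (apply Rmult_le_pos; lra).
  assert (0 <= A * (Re - Rpower r delta)) by (apply Rmult_le_pos; lra).
  fold Re; lra. }
apply Rnot_le_lt in hgt.
destruct hode as [hcont [hpw hder]].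
destruct (hpw (r + 1)) as [L hL].
set (F := fun s => E s - y s) in *.
set (K1 := -3 * Rpower R0 (4/3)).
set (G := mult_real_fct c (plus_fct (mult_real_fct K1 (fun s => Rpower s (-(1/3))))
           (mult_real_fct (/ p) (fun s => Rpower s p)))).
set (G' := fun s => c * (Rpower R0 (4/3) * Rpower s (-(1/3)) + Rpower s p) / s).
assert (hG : forall s, 0 < s -> derivable_pt_lim G s (G' s)).
{ intros s hs.
  assert (e : G' s = c * (K1 * (-(1/3) * Rpower s (-(1/3) - 1)) + / p * (p * Rpower s (p - 1)))).
  { unfold G', K1. rewrite !Rpower_m1 by lra. field. split; lra. }
  rewrite e. apply derivable_pt_lim_scal. apply derivable_pt_lim_plus;
  apply derivable_pt_lim_scal; apply derivable_pt_lim_power; lra. }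
assert (hFc : forall x, r1 <= x <= r -> continuity_pt F x).
{ intros x hx. apply (cont_half F R0); [exact hcont| lra]. }
assert (hGc : forall x, r1 <= x <= r -> continuity_pt G x).
{ intros x hx. apply derivable_continuous_pt. exists (G' x). apply hG. lra. }
assert (hD : forall x, r1 < x < r -> ~ In x L -> exists l, derivable_pt_lim F x l /\ Rabs l <= G' x).
{ intros x hx hn. destruct (hL x ltac:(lra) hn) as [l hl]. exists l. split; [exact hl|].
  rewrite (hder x l ltac:(lra) hl). unfold Rdiv. rewrite Rabs_mult, Rabs_inv, (Rabs_right x) by lra.
  unfold G'. unfold Rdiv. apply Rmult_le_compat_r. apply Rlt_le, Rinv_0_lt_compat; lra.
  apply hyb; lra. }
assert (h1 : G r1 - F r1 <= G r - F r).
{ apply (mono (fun s => G s - F s) L r1 r); [lra| |].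
  - intros x hx. apply (continuity_pt_minus G F x); auto.
  - intros x hx hn. destruct (hD x hx hn) as [l [hl hla]]. exists (G' x - l). split.
    + apply (derivable_pt_lim_minus G F x). apply hG; lra. exact hl.
    + pose proof (Rle_abs l). lra. }
assert (h2 : G r1 + F r1 <= G r + F r).
{ apply (mono (fun s => G s + F s) L r1 r); [lra| |].
  - intros x hx. apply (continuity_pt_plus G F x); auto.
  - intros x hx hn. destruct (hD x hx hn) as [l [hl hla]]. exists (G' x + l). split.
    + apply (derivable_pt_lim_plus G F x). apply hG; lra. exact hl.
    + pose proof (Rle_abs (-l)). rewrite Rabs_Ropp in H. lra. }
assert (hr1pos : 0 < r1) by lra.
assert (a1 : Rpower r (-(1/3)) <= Rpower r1 (-(1/3))) by (apply Rpower_neg_mono; lra).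
assert (a0 : 0 < Rpower r (-(1/3))) by apply Rpower_pos.
assert (aR : 0 < Rpower R0 (4/3)) by apply Rpower_pos.
assert (a3 : Rpower R0 (4/3) * Rpower r (-(1/3)) <= Re).
{ eapply Rle_trans; [|exact key2]. apply Rmult_le_compat_l; lra. }
set (ip := / Rabs p).
assert (hip : 0 < ip) by (apply Rinv_0_lt_compat; lra).
assert (a4 : / p * (Rpower r p - Rpower r1 p) <= ip * (Rpower r p + 1)).
{ assert (0 < Rpower r1 p) by apply Rpower_pos.
  destruct (Rlt_dec 0 p) as [pp|pn].
  - unfold ip. rewrite Rabs_right by lra.
    apply Rmult_le_compat_l. apply Rlt_le, Rinv_0_lt_compat; lra. lra.
  - assert (pn' : p < 0) by lra. unfold ip. rewrite Rabs_left by lra.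
    assert (Rpower r1 p <= 1).
    { rewrite <- (Rpower_O r1) by lra. apply Rle_Rpower; lra. }
    replace (/ p * (Rpower r p - Rpower r1 p)) with (/ - p * (Rpower r1 p - Rpower r p)) by (field; lra).
    apply Rmult_le_compat_l. apply Rlt_le, Rinv_0_lt_compat; lra. lra. }
assert (hGd : G r - G r1 <= c * (3 * Re + ip * (Rpower r p + 1))).
{ unfold G, mult_real_fct, plus_fct.
  replace (c * (K1 * Rpower r (- (1 / 3)) + / p * Rpower r p) -
     c * (K1 * Rpower r1 (- (1 / 3)) + / p * Rpower r1 p)) with
    (c * (3 * (Rpower R0 (4/3) * Rpower r1 (-(1/3))) - 3 * (Rpower R0 (4/3) * Rpower r (-(1/3)))
       + / p * (Rpower r p - Rpower r1 p))) by (unfold K1; ring).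
  apply Rmult_le_compat_l; [lra|].
  assert (0 < Rpower R0 (4/3) * Rpower r (-(1/3))) by (apply Rmult_lt_0_compat; lra).
  lra. }
assert (hFd : Rabs (F r - F r1) <= c * (3 * Re + ip * (Rpower r p + 1))).
{ apply Rabs_le. lra. }
assert (hyr : Rabs (y r) <= c * (Re + Rpower r p)).
{ eapply Rle_trans; [apply hyb; lra|]. apply Rmult_le_compat_l; lra. }
assert (hyr1 : Rabs (y r1) <= c * (Re + Re)).
{ eapply Rle_trans; [apply hyb; lra|]. apply Rmult_le_compat_l; [lra|].
  assert (Rpower r1 p <= Rpower r1 delta) by (apply Rle_Rpower; lra). lra. }
assert (hEr1 : Rabs (E r1 - R0 * V) <= A * (Re + Re)).
{ eapply Rle_trans; [apply hE; lra|]. fold Re. apply Rmult_le_compat_l; lra. }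
assert (split : E r - R0 * V = (E r1 - R0 * V) + (F r - F r1) + y r + - y r1) by (unfold F; ring).
rewrite split. fold Re.
eapply Rle_trans. apply Rabs_triang. rewrite Rabs_Ropp.
eapply Rle_trans. apply Rplus_le_compat_r. apply Rabs_triang.
eapply Rle_trans. apply Rplus_le_compat_r. apply Rplus_le_compat_r. apply Rabs_triang.
assert (0 <= c * ip * (Re - 1)) by (apply Rmult_le_pos; [apply Rmult_le_pos|]; lra).
assert (0 <= A * Rpower r p) by (apply Rmult_le_pos; lra).
assert (0 <= c * Rpower r p) by (apply Rmult_le_pos; lra).
assert (0 <= c * Re) by (apply Rmult_le_pos; lra).
replace (c / Rabs p) with (c * ip) by reflexivity.
lra.
Qed.
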